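(* Let $\alpha$ and $\beta$ be positive reals with $3\alpha < \beta$. Let $n$ be a positive integer, let $\sqrt{\log n/n} \ll p = p(n) \le 1$ and let $D \in \mathcal{D}(n,p)$. Then a.a.s. the following holds for every nonempty $S \subseteq [n]$ of size $s \le \alpha n$ and every set $T$ of $s$ ordered pairs (arcs) with both endpoints in $[n]\setminus S$ which span a digraph with maximum out-degree one and maximum in-degree one: there are fewer than $\beta s p^2 n$ pairs $((x,y),z) \in T \times S$ such that $(x,z) \in E(D)$ and $(z,y) \in E(D)$.
   Context: $\mathcal{D}(n,p)$ is the random digraph on $[n]$ where each ordered pair $(u,v)$, $u\ne v$, is an arc independently with probability $p$; $E(D)$ is its arc set. a.a.s. means with probability tending to $1$ as $n\to\infty$; $f \ll g$ means $f/g\to0$; $\log$ is natural. *)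

(* Defs.v *)
From mathcomp Require Import all_boot all_order all_algebra.
From mathcomp Require Import all_classical all_reals all_analysis.
Import Order.TTheory GRing.Theory Num.Theory.

Set Implicit Arguments.
Unset Strict Implicit.
Unset Printing Implicit Defensive.

Local Open Scope ring_scope.

(* A digraph on [n] (vertices 'I_n) is given by its arc set, a set of
   ordered pairs (u,v) with u <> v. *)
Definition loopless (n : nat) (E : {set 'I_n * 'I_n}) : bool :=
  [forall a in E, a.1 != a.2].

(* Probability, in the random digraph D(n,p), that the arc set satisfies Q:
   each of the n(n-1) ordered pairs (u,v), u <> v, is an arc independently
   with probability p. *)
Definition Dnp_prob {R : realType} (n : nat) (p : R)
    (Q : {set 'I_n * 'I_n} -> Prop) : R :=
  \sum_(E : {set 'I_n * 'I_n} | loopless E && `[< Q E >])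
     p ^+ #|E| * (1 - p) ^+ (n * n.-1 - #|E|)%N.

Definition lemma4p3_prop {R : realType} (alpha beta p : R) (n : nat)
    (E : {set 'I_n * 'I_n}) : Prop :=
  forall (S : {set 'I_n}) (T : {set 'I_n * 'I_n}),
    S != finset.set0 ->
    (#|S|%:R <= alpha * n%:R) ->
    #|T| = #|S| ->
    (forall a, a \in T -> [/\ a.1 \notin S, a.2 \notin S & a.1 != a.2]) ->
    (forall x : 'I_n, (#|[set a in T | a.1 == x]| <= 1)%N) ->
    (forall y : 'I_n, (#|[set a in T | a.2 == y]| <= 1)%N) ->
    #|[set az : ('I_n * 'I_n) * 'I_n |
         [&& az.1 \in T, az.2 \in S,
             (az.1.1, az.2) \in E & (az.2, az.1.2) \in E]]|%:R
      < beta * #|S|%:R * p ^+ 2 * n%:R.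

Arguments Dnp_prob {R} n p Q.
Arguments lemma4p3_prop {R} alpha beta p n E.

(* Main.v *)
Require Import Defs.
From mathcomp Require Import all_boot all_order all_algebra.
From mathcomp Require Import all_classical all_reals all_analysis.
From mathcomp Require Import ring lra zify.
Import Order.TTheory GRing.Theory Num.Theory numFieldNormedType.Exports.
Local Open Scope ring_scope.
Local Notation subsetP := fintype.subsetP.

Lemma expR1_lt3 (R : realType) : expR (1 : R) < 3.
Proof.
have h1 : expR (- (6:R)^-1) >= 1 - (6:R)^-1.
  by rewrite -[1 - _]/(1 + - _) expR_ge1Dx.
have h2 : expR ((6:R)^-1) <= 6 / 5.
  have e := expRxMexpNx_1 ((6:R)^-1).
  have hp := expR_gt0 ((6:R)^-1).
  move: h1 e hp; set a := expR _; set b := expR _ => h1 e hp.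
  have h6 : (6:R)^-1 = 1/6 by rewrite div1r.
  rewrite h6 in h1. nra.
have -> : (1 : R) = 6%:R * (6:R)^-1 by rewrite divff.
rewrite expRM_natl.
apply: (le_lt_trans (y := (6/5 : R) ^+ 6)).
  by apply: lerXn2r => //; rewrite ?nnegrE ?expR_ge0 //.
by rewrite !exprS expr0; lra.
Qed.

Lemma succ_pow_le (R : realType) (k : nat) :
  (k.+1%:R : R) ^+ k <= 3 * (k%:R) ^+ k.
Proof.
case: k => [|k]; first by rewrite !expr0; lra.
set m := k.+1.
have hm : (0 : R) < m%:R by rewrite ltr0n.
have -> : (m.+1%:R : R) = m%:R * (1 + m%:R^-1).
  by rewrite mulrDr mulr1 mulfV ?gt_eqF // -natr1.
rewrite exprMn mulrC ler_wpM2r //.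
apply: (le_trans (y := expR (m%:R^-1) ^+ m)).
  apply: lerXn2r; rewrite ?nnegrE ?expR_ge0 ?expR_ge1Dx //.
rewrite -expRM_natl mulfV ?gt_eqF //.
exact: ltW (expR1_lt3 R).
Qed.

Lemma pow_le_fact (R : realType) (k : nat) :
  (k%:R : R) ^+ k <= 3 ^+ k * (k`!)%:R.
Proof.
elim: k => [|k IH]; first by rewrite !expr0 mul1r.
rewrite exprS factS natrM.
have h := succ_pow_le R k.
have hk : (0 : R) <= k.+1%:R by [].
apply: (le_trans (y := k.+1%:R * (3 * k%:R ^+ k))).
  exact: ler_wpM2l.
rewrite exprS mulrCA -mulrA.
apply: ler_wpM2l => //; rewrite mulrCA; exact: ler_wpM2l.
Qed.

Lemma succ_pow_fact (R : realType) (k : nat) :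
  (k.+1%:R : R) ^+ k <= 3 ^+ k.+1 * (k`!)%:R.
Proof.
apply: (le_trans (succ_pow_le R k)).
rewrite exprS -mulrA; apply: ler_wpM2l => //.
exact: pow_le_fact.
Qed.

Lemma ffact_le_exp (m k : nat) : (m ^_ k <= m ^ k)%N.
Proof.
elim: k m => [|k IH] m //.
rewrite ffactnS expnS leq_mul2l; apply/orP; right.
apply: (leq_trans (IH m.-1)); have [->|kp] := posnP k; first by rewrite !expn0.
by rewrite leq_exp2r // leq_pred.
Qed.

Lemma bin_le_real (R : realType) (m k : nat) :
  ('C(m, k)%:R : R) <= (m%:R) ^+ k / (k`!)%:R.
Proof.
have hf : (0 : R) < (k`!)%:R by rewrite ltr0n fact_gt0.
rewrite ler_pdivlMr // -natrM bin_ffact -natrX ler_nat.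
exact: ffact_le_exp.
Qed.

Lemma one_plus_inv_pow (R : realType) (m : nat) :
  (0 < m)%N -> (1 + (m%:R : R)^-1) ^+ m <= 3.
Proof.
move=> m0.
have hm : (0 : R) < m%:R by rewrite ltr0n.
apply: (le_trans (y := expR (m%:R^-1) ^+ m)).
  apply: lerXn2r; rewrite ?nnegrE ?expR_ge0 ?expR_ge1Dx //.
rewrite -expRM_natl mulfV ?gt_eqF //.
exact: ltW (expR1_lt3 R).
Qed.

Lemma sum_subsets_binom (R : realType) (T : finType) (B : {set T}) (x y : R) :
  \sum_(F : {set T} | F \subset B) x ^+ #|F| * y ^+ (#|B| - #|F|) = (x + y) ^+ #|B|.
Proof.
rewrite (partition_big (fun F : {set T} => (inord #|F| : 'I_(#|B|).+1)) xpredT) //=.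
rewrite addrC exprDn; apply: eq_bigr => -[i Hi] _.
have E : forall F : {set T}, (F \subset B) && (inord #|F| == Ordinal Hi :> 'I_(#|B|).+1)
   = (F \in [set A : {set T} | A \subset B & #|A| == i]).
  move=> F; rewrite inE; case FB: (F \subset B) => //=.
  have hF : (#|F| < #|B|.+1)%N by rewrite ltnS subset_leq_card.
  apply/eqP/eqP => [h|h].
    by have := congr1 val h; rewrite /= inordK.
  by apply: val_inj; rewrite /= inordK // h.
rewrite (eq_bigl _ _ E) (eq_bigr (fun _ => x ^+ i * y ^+ (#|B| - i))); last first.
  by move=> F; rewrite inE => /andP[_ /eqP ->].
by rewrite sumr_const cards_draws mulrC.
Qed.

Definition offd n := [set a : 'I_n * 'I_n | a.1 != a.2].

Lemma looplessE n (E : {set 'I_n * 'I_n}) : loopless E = (E \subset offd n).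
Proof.
apply/idP/idP => [/forall_inP h|/subsetP h].
  by apply/subsetP => a aE; rewrite inE h.
by apply/forall_inP => a aE; have := h a aE; rewrite inE.
Qed.

Lemma card_offd n : #|offd n| = (n * n.-1)%N.
Proof.
have hd : #|[set a : 'I_n * 'I_n | a.1 == a.2]| = n.
  have -> : [set a : 'I_n * 'I_n | a.1 == a.2] = [set (x, x) | x : 'I_n].
    apply/setP => -[a b]; rewrite inE /=; apply/eqP/imsetP => [->|[x _ [-> ->]]] //.
    by exists b.
  by rewrite card_imset ?card_ord // => x y [].
have := cardsC [set a : 'I_n * 'I_n | a.1 == a.2].
rewrite hd card_prod card_ord.
have -> : ~: [set a : 'I_n * 'I_n | a.1 == a.2] = offd n.
  by apply/setP => a; rewrite !inE.
move=> h; rewrite -subn1 mulnBr muln1 -h; lia.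
Qed.

Definition wgt (R : realType) n (q : R) (E : {set 'I_n * 'I_n}) :=
  q ^+ #|E| * (1 - q) ^+ (n * n.-1 - #|E|).
Arguments wgt {R n} q E.

Lemma sum_superset (R : realType) n (q : R) (A : {set 'I_n * 'I_n}) :
  A \subset offd n ->
  \sum_(E | loopless E && (A \subset E)) wgt q E = q ^+ #|A|.
Proof.
move=> AO.
rewrite (reindex_onto (fun F => A :|: F) (fun E => E :\: A)); last first.
  move=> E /andP[_ AE]; apply/setP => x; rewrite !inE.
  by case xA: (x \in A) => //=; rewrite (subsetP AE).
transitivity (\sum_(F : {set 'I_n * 'I_n} | F \subset offd n :\: A) wgt q (A :|: F)).
  apply: eq_bigl => F. rewrite looplessE finset.subsetUl andbT.
  apply/andP/idP => [[h1 /eqP h2]|h].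
    rewrite -h2; apply/subsetP => x /setDP [xAF xA].
    by rewrite finset.in_setD xA /= (subsetP h1).
  split.
    rewrite finset.subUset AO /=; apply: (fintype.subset_trans h); exact: finset.subsetDl.
  apply/eqP/setP => x; rewrite !inE.
  case xF: (x \in F); last by rewrite orbF andNb.
  have /setDP[_ xnA] := subsetP h x xF.
  by rewrite orbT andbT.
have hc : forall F : {set 'I_n * 'I_n}, F \subset offd n :\: A -> #|A :|: F| = (#|A| + #|F|)%N.
  move=> F h; rewrite -cardsUI.
  have -> : A :&: F = finset.set0.
    apply/setP => x; rewrite !inE; case xA: (x \in A) => //=.
    by apply/negP => xF; have := subsetP h x xF; rewrite !inE xA.
  by rewrite cards0 addn0.
have hD : #|offd n :\: A| = (n * n.-1 - #|A|)%N.
  by rewrite cardsD (finset.setIidPr AO) card_offd.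
rewrite (eq_bigr (fun F : {set 'I_n * 'I_n} => q ^+ #|A| * (q ^+ #|F| * (1 - q) ^+ (#|offd n :\: A| - #|F|)))); last first.
  move=> F h; rewrite /wgt hc // exprD hD subnDA mulrA //.
by rewrite -mulr_sumr sum_subsets_binom addrCA subrr addr0 expr1n mulr1.
Qed.

Set Implicit Arguments.
Unset Strict Implicit.

Lemma sum_le_filter (R : realType) (I : finType) (P Q : pred I) (f g : I -> R) :
  (forall i, P i -> Q i) -> (forall i, P i -> f i <= g i) ->
  (forall i, Q i -> 0 <= g i) ->
  \sum_(i | P i) f i <= \sum_(i | Q i) g i.
Proof.
move=> PQ fg g0; rewrite [X in X <= _]big_mkcond [X in _ <= X]big_mkcond.
apply: ler_sum => i _; case Pi: (P i); first by rewrite PQ // fg.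
by case: (Q i) (g0 i) => // ->.
Qed.

Definition cnt n (T : {set 'I_n * 'I_n}) (S : {set 'I_n}) (E : {set 'I_n * 'I_n}) :=
  [set az : ('I_n * 'I_n) * 'I_n |
         [&& az.1 \in T, az.2 \in S,
             (az.1.1, az.2) \in E & (az.2, az.1.2) \in E]].
Arguments cnt {n} T S E.

Definition AK n (K : {set ('I_n * 'I_n) * 'I_n}) : {set 'I_n * 'I_n} :=
  [set (az.1.1, az.2) | az in K] :|: [set (az.2, az.1.2) | az in K].
Arguments AK {n} K.

Lemma AK_sub n (T : {set 'I_n * 'I_n}) (S : {set 'I_n}) (E : {set 'I_n * 'I_n}) (K : {set ('I_n * 'I_n) * 'I_n}) :
  K \subset finset.setX T S -> (K \subset cnt T S E) = (AK K \subset E).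
Proof.
move=> KX; apply/idP/idP => H.
  apply/subsetP => b; rewrite finset.in_setU => /orP[] /imsetP[az azK ->];
  by have := subsetP H az azK; rewrite inE => /and4P[].
apply/subsetP => -[b z] azK; rewrite inE.
have := subsetP KX _ azK; rewrite finset.in_setX => /andP[-> ->] /=.
rewrite !(subsetP H) // finset.in_setU; apply/orP; [right|left];
  by apply/imsetP; exists (b, z).
Qed.

Lemma AK_off n (T : {set 'I_n * 'I_n}) (S : {set 'I_n}) (K : {set ('I_n * 'I_n) * 'I_n}) :
  (forall a, a \in T -> a.1 \notin S /\ a.2 \notin S) ->
  K \subset finset.setX T S -> AK K \subset offd n.
Proof.
move=> HT KX; apply/subsetP => b; rewrite finset.in_setU => /orP[] /imsetP[[c z] azK ->];
  have := subsetP KX _ azK; rewrite finset.in_setX => /andP[/HT [h1 h2] h3];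
  rewrite inE /=; apply/negP => /eqP e.
  by move: h1; rewrite e h3.
by move: h2; rewrite -e h3.
Qed.

Lemma card_AK n (T : {set 'I_n * 'I_n}) (S : {set 'I_n}) (K : {set ('I_n * 'I_n) * 'I_n}) :
  (forall a, a \in T -> a.1 \notin S /\ a.2 \notin S) ->
  (forall x : 'I_n, (#|[set a in T | a.1 == x]| <= 1)%N) ->
  (forall y : 'I_n, (#|[set a in T | a.2 == y]| <= 1)%N) ->
  K \subset finset.setX T S -> #|AK K| = (2 * #|K|)%N.
Proof.
move=> HT Hout Hin KX.
have mem : forall az, az \in K -> [/\ az.1 \in T, az.2 \in S, az.1.1 \notin S & az.1.2 \notin S].
  move=> [c z] azK; have := subsetP KX _ azK; rewrite finset.in_setX => /andP[h1 h2].
  by have [h3 h4] := HT _ h1; split.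
rewrite /AK cardsU.
have -> : [set (az.1.1, az.2) | az in K] :&: [set (az.2, az.1.2) | az in K] = finset.set0.
  apply/setP => b; rewrite !inE; apply/negP => /andP[/imsetP[a aK ->] /imsetP[c cK [e1 e2]]].
  have [_ h _ _] := mem c cK; have [_ _ h' _] := mem a aK.
  by move: h'; rewrite e1 h.
rewrite cards0 subn0 !card_in_imset ?mul2n ?addnn //.
  move=> [[a1 a2] a3] [[c1 c2] c3] aK cK /= [e1 e2]; subst.
  have [hc _ _ _] := mem _ cK; have [ha _ _ _] := mem _ aK.
  move/card_le1_eqP: (Hin c2) => h.
  have := h (a1, c2) (c1, c2); rewrite !inE /= ha hc !eqxx => /(_ isT isT) [->] //.
move=> [[a1 a2] a3] [[c1 c2] c3] aK cK /= [e1 e2]; subst.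
have [hc _ _ _] := mem _ cK; have [ha _ _ _] := mem _ aK.
move/card_le1_eqP: (Hout c1) => h.
have := h (c1, a2) (c1, c2); rewrite !inE /= ha hc !eqxx => /(_ isT isT) [->] //.
Qed.

Lemma wgt_ge0 (R : realType) n (q : R) (E : {set 'I_n * 'I_n}) :
  0 <= q <= 1 -> 0 <= wgt q E.
Proof.
by case/andP => q0 q1; rewrite /wgt mulr_ge0 // exprn_ge0 // subr_ge0.
Qed.

Lemma bad_bound (R : realType) n (q : R) (T : {set 'I_n * 'I_n}) (S : {set 'I_n}) (k : nat) :
  0 <= q <= 1 ->
  (forall a, a \in T -> a.1 \notin S /\ a.2 \notin S) ->
  (forall x : 'I_n, (#|[set a in T | a.1 == x]| <= 1)%N) ->
  (forall y : 'I_n, (#|[set a in T | a.2 == y]| <= 1)%N) ->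
  \sum_(E | loopless E && (k <= #|cnt T S E|)%N) wgt q E
    <= 'C(#|T| * #|S|, k)%:R * q ^+ (2 * k).
Proof.
move=> hq HT Hout Hin.
apply: (le_trans (y := \sum_(E | loopless E)
   \sum_(K : {set ('I_n * 'I_n) * 'I_n} | (K \subset cnt T S E) && (#|K| == k)) wgt q E)).
  apply: sum_le_filter => [E /andP[] //| E /andP[_ hk] | E _]; last first.
    by apply: sumr_ge0 => K _; exact: wgt_ge0.
  rewrite (eq_bigl (fun K => K \in [set K : {set ('I_n * 'I_n) * 'I_n} | K \subset cnt T S E & #|K| == k])); last first.
    by move=> K; rewrite inE.
  rewrite sumr_const cards_draws -mulr_natr.
  rewrite -[X in X <= _]mulr1 ler_wpM2l ?wgt_ge0 //.
  by rewrite (ler_nat _ 1) bin_gt0.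
rewrite (exchange_big_dep (fun K : {set ('I_n * 'I_n) * 'I_n} => (K \subset finset.setX T S) && (#|K| == k))) /=; last first.
  move=> E K _ /andP[h ->]; rewrite andbT; apply: (fintype.subset_trans h).
  by apply/subsetP => -[b z]; rewrite inE finset.in_setX => /and4P[-> ->].
rewrite (eq_bigr (fun _ => q ^+ (2 * k))); last first.
  move=> K /andP[KX /eqP Kk].
  rewrite (eq_bigl (fun E => loopless E && (AK K \subset E))); last first.
    by move=> E; rewrite AK_sub // Kk eqxx andbT.
  by rewrite sum_superset ?(card_AK HT Hout Hin) // -?Kk //; exact: (AK_off HT).
rewrite (eq_bigl (fun K => K \in [set K : {set ('I_n * 'I_n) * 'I_n} | K \subset finset.setX T S & #|K| == k])); last first.
  by move=> K; rewrite inE.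
by rewrite sumr_const cards_draws cardsX mulr_natl.
Qed.

Lemma num_bound (R : realType) (alpha beta q : R) (s n k : nat) :
  0 < alpha -> 0 < beta -> 0 <= q -> s%:R <= alpha * n%:R ->
  k = Num.truncn (beta * s%:R * q ^+ 2 * n%:R) ->
  'C(s * s, k)%:R * q ^+ (2 * k) <= 3 * (3 * alpha / beta) ^+ k.
Proof.
move=> a0 b0 q0 hs hk.
set t := beta * s%:R * q ^+ 2 * n%:R.
have ht : t < (k.+1)%:R by rewrite hk; exact: truncnS_gt.
have hs0 : (0 : R) <= s%:R by [].
have hq2 : 0 <= q ^+ 2 by rewrite exprn_ge0.
have hx : s%:R * s%:R * q ^+ 2 <= alpha / beta * (k.+1)%:R.
  apply: (le_trans (y := alpha / beta * t)).
    have -> : alpha / beta * t = alpha * n%:R * s%:R * q ^+ 2.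
      by rewrite /t; field; rewrite gt_eqF.
    apply: ler_wpM2r => //; rewrite [X in X <= _]mulrC; exact: ler_wpM2r.
  by apply: ler_wpM2l; [rewrite divr_ge0 // ltW | exact: ltW].
have hab : 0 <= alpha / beta by rewrite divr_ge0 // ltW.
have hf : (0 : R) < (k`!)%:R by rewrite ltr0n fact_gt0.
apply: (le_trans (y := (s * s)%:R ^+ k / (k`!)%:R * q ^+ (2 * k))).
  by apply: ler_wpM2r; [rewrite exprn_ge0 | exact: bin_le_real].
rewrite mulrAC exprM.
have -> : (s * s)%:R ^+ k * (q ^+ 2) ^+ k = (s%:R * s%:R * q ^+ 2) ^+ k :> R.
  by rewrite natrM -exprMn.
apply: (le_trans (y := (alpha / beta * (k.+1)%:R) ^+ k / (k`!)%:R)).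
  apply: ler_wpM2r; first by rewrite invr_ge0 ltW.
  apply: lerXn2r hx; rewrite nnegrE; repeat apply: mulr_ge0 => //;
  by rewrite ?invr_ge0 ltW.
rewrite exprMn -[(alpha / beta) ^+ k * _ / _]mulrA.
apply: (le_trans (y := (alpha / beta) ^+ k * 3 ^+ k.+1)).
  apply: ler_wpM2l; first by rewrite exprn_ge0.
  by rewrite ler_pdivrMr // succ_pow_fact.
rewrite exprS mulrCA; apply: ler_wpM2l => //.
by rewrite -exprMn mulrC mulrA.
Qed.

Lemma exp_bound (R : realType) (c beta M q : R) (s n k : nat) :
  0 < c -> c < 1 -> 0 < beta -> 6 <= beta * M ^+ 2 * (- ln c) -> (0 < n)%N ->
  M ^+ 2 * ln (n%:R : R) <= q ^+ 2 * n%:R ->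
  k = Num.truncn (beta * s%:R * q ^+ 2 * n%:R) ->
  c ^+ k <= c^-1 * (n%:R ^+ (6 * s))^-1.
Proof.
move=> c0 c1 b0 hM n0 hq hk.
set L := - ln c.
have L0 : 0 < L by rewrite /L oppr_gt0 ln_lt0 // c0 c1.
have hn : (0 : R) < n%:R by rewrite ltr0n.
have lnn0 : 0 <= ln (n%:R : R) by rewrite ln_ge0 // ler1n.
set t := beta * s%:R * q ^+ 2 * n%:R.
have ht : t < (k.+1)%:R by rewrite hk; exact: truncnS_gt.
have Ec : c = expR (ln c) by rewrite lnK // posrE.
have En : (n%:R : R) = expR (ln n%:R) by rewrite lnK // posrE.
rewrite {1}Ec -expRM_natl.
rewrite [X in X^-1]Ec -expRN En -expRM_natl -expRN -expRD ler_expR.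
have h1 : t * L <= (k.+1)%:R * L by apply: ler_wpM2r; [exact: ltW | exact: ltW].
have hs : (0 : R) <= s%:R by [].
have h2 : beta * s%:R * (M ^+ 2 * ln n%:R) <= t.
  have -> : t = beta * s%:R * (q ^+ 2 * n%:R) by rewrite /t; ring.
  apply: ler_wpM2l; first by rewrite mulr_ge0 // ltW.
  exact: hq.
have h3 : 6 * (s%:R * ln (n%:R : R)) <= beta * M ^+ 2 * L * (s%:R * ln n%:R).
  by apply: ler_wpM2r => //; rewrite mulr_ge0.
have h4 : beta * M ^+ 2 * L * (s%:R * ln (n%:R : R)) = (beta * s%:R * (M ^+ 2 * ln n%:R)) * L.
  by ring.
have h5 : (beta * s%:R * (M ^+ 2 * ln (n%:R : R))) * L <= t * L.
  by apply: ler_wpM2r => //; exact: ltW.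
rewrite natrM -natr1 /L in h1 h3 h4 h5 *.
set x := ln c in h1 h3 h4 h5 *.
set y := ln (n%:R : R) in h1 h3 h4 h5 *.

nra.
Qed.

Lemma count_bound (R : realType) (n : nat) : (0 < n)%N ->
  \sum_(ST : {set 'I_n} * {set 'I_n * 'I_n} | (ST.1 != finset.set0) && (#|ST.2| == #|ST.1|))
     ((n%:R : R) ^+ (6 * #|ST.1|))^-1 <= 3 * ((n%:R : R) ^+ 2)^-1.
Proof.
move=> n0.
set N : R := n%:R.
have hN : 0 < N by rewrite ltr0n.
set r := N^-1.
have r0 : 0 < r by rewrite invr_gt0.
have r1 : r <= 1 by rewrite invf_le1 // ler1n.
rewrite -(pair_big_dep (fun S : {set 'I_n} => S != finset.set0)
  (fun S (T : {set 'I_n * 'I_n}) => #|T| == #|S|) (fun S T => (N ^+ (6 * #|S|))^-1)) /=.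
apply: (le_trans (y := \sum_(S : {set 'I_n}) r ^+ 2 * r ^+ #|S|)).
  apply: sum_le_filter => // S SN; last first.
    by rewrite mulr_ge0 // exprn_ge0 // ltW.
  rewrite (eq_bigl (fun T => T \in [set T : {set 'I_n * 'I_n} | #|T| == #|S|])); last first.
    by move=> T; rewrite inE.
  rewrite sumr_const card_draws card_prod card_ord -mulr_natr.
  set s := #|S|.
  have s0 : (0 < s)%N by rewrite card_gt0.
  have hC : ('C(n * n, s)%:R : R) <= (N ^+ 2) ^+ s.
    apply: (le_trans (bin_le_real R (n * n) s)).
    rewrite natrM -expr2 ler_pdivrMr ?ltr0n ?fact_gt0 //.
    by rewrite ler_peMr ?exprn_ge0 // ler1n fact_gt0.
  apply: (le_trans (y := (N ^+ (6 * s))^-1 * (N ^+ 2) ^+ s)).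
    by apply: ler_wpM2l hC; rewrite invr_ge0 exprn_ge0 // ltW.
  have -> : (N ^+ (6 * s))^-1 * (N ^+ 2) ^+ s = r ^+ (4 * s).
    rewrite -exprM /r exprVn.
    have -> : (6 * s = 4 * s + 2 * s)%N by lia.
    rewrite exprD invfM -mulrA mulVf ?mulr1 ?expf_neq0 ?gt_eqF //.
  rewrite -exprD; apply: ler_wiXn2l; [exact: ltW | exact: r1 | rewrite /=; lia].
rewrite -mulr_sumr.
have := @sum_subsets_binom R _ [set: 'I_n] r 1; rewrite cardsT card_ord => hb.
have -> : \sum_(S : {set 'I_n}) r ^+ #|S| = (r + 1) ^+ n.
  rewrite -hb; apply: eq_big => S; first by rewrite finset.subsetT.
  by rewrite expr1n mulr1.
rewrite mulrC exprVn; apply: ler_wpM2r; first by rewrite invr_ge0 exprn_ge0 // ltW.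
by rewrite addrC; exact: one_plus_inv_pow.
Qed.

Definition validST (R : realType) (alpha : R) n (ST : {set 'I_n} * {set 'I_n * 'I_n}) : Prop :=
  ST.1 != finset.set0 /\ (#|ST.1|%:R <= alpha * n%:R) /\ #|ST.2| = #|ST.1| /\
  (forall a, a \in ST.2 -> [/\ a.1 \notin ST.1, a.2 \notin ST.1 & a.1 != a.2]) /\
  (forall x : 'I_n, (#|[set a in ST.2 | a.1 == x]| <= 1)%N) /\
  (forall y : 'I_n, (#|[set a in ST.2 | a.2 == y]| <= 1)%N).
Arguments validST {R} alpha {n} ST.

Definition kST (R : realType) (beta q : R) n (ST : {set 'I_n} * {set 'I_n * 'I_n}) : nat :=
  Num.truncn (beta * #|ST.1|%:R * q ^+ 2 * n%:R).
Arguments kST {R} beta q {n} ST.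

Lemma bad_union (R : realType) (alpha beta q : R) n : 0 <= q <= 1 ->
  \sum_(E : {set 'I_n * 'I_n} | loopless E && ~~ `[< lemma4p3_prop alpha beta q n E >]) wgt q E <=
  \sum_(ST : {set 'I_n} * {set 'I_n * 'I_n} | `[< validST alpha ST >])
     \sum_(E : {set 'I_n * 'I_n} | loopless E && (kST beta q ST <= #|cnt ST.2 ST.1 E|)%N) wgt q E.
Proof.
move=> hq.
apply: (le_trans (y := \sum_(E : {set 'I_n * 'I_n} | loopless E)
   \sum_(ST : {set 'I_n} * {set 'I_n * 'I_n} | `[< validST alpha ST >] && (kST beta q ST <= #|cnt ST.2 ST.1 E|)%N) wgt q E)).
  apply: sum_le_filter => [E /andP[] //| E /andP[lE nQ] | E _]; last first.
    by apply: sumr_ge0 => ST _; exact: wgt_ge0.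
  have [ST /andP[HV Hk]] : exists ST : {set 'I_n} * {set 'I_n * 'I_n}, `[< validST alpha ST >] && (kST beta q ST <= #|cnt ST.2 ST.1 E|)%N.
    case: (pselect (exists ST : {set 'I_n} * {set 'I_n * 'I_n}, `[< validST alpha ST >] && (kST beta q ST <= #|cnt ST.2 ST.1 E|)%N)) => [//|hno].
    exfalso; move/asboolPn: nQ; apply => S T h1 h2 h3 h4 h5 h6.
    case: (boolP (_ < _)) => // hc; exfalso; apply: hno; exists (S, T).
    rewrite asboolT; last by do 5 (split => //).
    rewrite /= /kST -leNgt in hc *.
    by have := le_truncn hc; rewrite natrK.
  rewrite (bigD1 ST) /=; last by rewrite HV Hk.
  by rewrite lerDl; apply: sumr_ge0 => ST' _; exact: wgt_ge0.
rewrite (exchange_big_dep (fun ST => `[< validST alpha ST >])) /=; last by move=> E ST _ /andP[].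
apply: ler_sum => ST HV; apply: sum_le_filter => [E /andP[-> /andP[_ ->]] //|//|E _].
exact: wgt_ge0.
Qed.

Local Open Scope classical_set_scope.

Lemma bad_total (R : realType) (alpha beta c M q : R) (n : nat) :
  0 < alpha -> 0 < beta -> c = 3 * alpha / beta -> c < 1 ->
  6 <= beta * M ^+ 2 * (- ln c) -> (0 < n)%N -> 0 <= q <= 1 ->
  M ^+ 2 * ln (n%:R : R) <= q ^+ 2 * n%:R ->
  \sum_(E : {set 'I_n * 'I_n} | loopless E && ~~ `[< lemma4p3_prop alpha beta q n E >]) wgt q E
   <= 3 * c^-1 * (3 * ((n%:R : R) ^+ 2)^-1).
Proof.
move=> a0 b0 ce c1 hM n0 hq hqn.
have c0 : 0 < c by rewrite ce divr_gt0 // mulr_gt0.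
apply: (le_trans (@bad_union R alpha beta q n hq)).
apply: (le_trans (y := \sum_(ST : {set 'I_n} * {set 'I_n * 'I_n} |
   (ST.1 != finset.set0) && (#|ST.2| == #|ST.1|)) 3 * c^-1 * ((n%:R : R) ^+ (6 * #|ST.1|))^-1)).
  apply: sum_le_filter => [ST /asboolP [h1 [_ [h3 _]]]|ST /asboolP [h1 [h2 [h3 [h4 [h5 h6]]]]]|ST _].
  - by rewrite h1 h3 eqxx.
  - have HT : forall a, a \in ST.2 -> a.1 \notin ST.1 /\ a.2 \notin ST.1.
      by move=> a /h4 [].
    apply: (le_trans (@bad_bound R n q ST.2 ST.1 (kST beta q ST) hq HT h5 h6)).
    rewrite h3.
    apply: (le_trans (@num_bound R alpha beta q #|ST.1| n (kST beta q ST) a0 b0 _ h2 (erefl _))); first by case/andP: hq.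
    rewrite -ce -mulrA; apply: ler_wpM2l => //.
    exact: (@exp_bound R c beta M q #|ST.1| n (kST beta q ST) c0 c1 b0 hM n0 hqn (erefl _)).
  - by rewrite !mulr_ge0 // ?invr_ge0 ?exprn_ge0 // ltW.
rewrite -mulr_sumr; apply: ler_wpM2l; first by rewrite mulr_ge0 // invr_ge0 ltW.
exact: count_bound.
Qed.

Lemma prob_split (R : realType) n (q : R) (Q : {set 'I_n * 'I_n} -> Prop) :
  Dnp_prob n q Q = 1 - \sum_(E : {set 'I_n * 'I_n} | loopless E && ~~ `[< Q E >]) wgt q E.
Proof.
have tot : \sum_(E : {set 'I_n * 'I_n} | loopless E) wgt q E = 1.
  have := @sum_superset R n q finset.set0 (finset.sub0set _).
  rewrite cards0 expr0 => <-; apply: eq_bigl => E.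
  by rewrite finset.sub0set andbT.
rewrite (bigID (fun E => `[< Q E >])) /= in tot.
by rewrite -tot addrK.
Qed.

Theorem lemma4p3 (R : realType) (alpha beta : R) (p : nat -> R) :
  0 < alpha -> 0 < beta -> 3 * alpha < beta ->
  (forall n, 0 <= p n <= 1) ->
  (forall M : R, 0 < M ->
     exists N : nat, forall n : nat, (N <= n)%N ->
       M * Num.sqrt (ln (n%:R : R) / n%:R) <= p n) ->
  (fun n : nat => Dnp_prob n (p n) (lemma4p3_prop alpha beta (p n) n)) @ \oo --> (1 : R).
Proof.
move=> a0 b0 hab hp hM.
set c := 3 * alpha / beta.
have c0 : 0 < c by rewrite divr_gt0 // mulr_gt0.
have c1 : c < 1 by rewrite /c ltr_pdivrMr // mul1r.
set L := - ln c.
have L0 : 0 < L by rewrite /L oppr_gt0 ln_lt0 // c0 c1.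
set u := 6 / (beta * L).
have bL : 0 < beta * L by rewrite mulr_gt0.
have u0 : 0 < u by rewrite divr_gt0.
have bLu : beta * L * u = 6 by rewrite /u mulrC -mulrA mulVf ?mulr1 // gt_eqF.
set M := 1 + u.
have M0 : 0 < M by rewrite /M; lra.
have hML : 6 <= beta * M ^+ 2 * (- ln c).
  rewrite -/L.
  have -> : beta * M ^+ 2 * L = (beta * L) * (1 + u) ^+ 2 by rewrite /M; ring.
  nra.
have [N1 HN1] := hM M M0.
set K := 18 * c^-1.
apply: (@squeeze_cvgr _ _ _ _ (fun n => 1 - K * harmonic n) (fun _ => 1)).
- exists (maxn N1 1) => // n /= hn.
  have n1 : (N1 <= n)%N by rewrite geq_max in hn; case/andP: hn.
  have n0 : (0 < n)%N by rewrite geq_max in hn; case/andP: hn.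
  rewrite prob_split.
  have hq := hp n.
  have hb0 : 0 <= \sum_(E : {set 'I_n * 'I_n} | loopless E && ~~ `[< lemma4p3_prop alpha beta (p n) n E >]) wgt (p n) E.
    by apply: sumr_ge0 => E _; exact: wgt_ge0.
  have hN : (0 : R) < n%:R by rewrite ltr0n.
  have hqn : M ^+ 2 * ln (n%:R : R) <= p n ^+ 2 * n%:R.
    have hl : 0 <= ln (n%:R : R) / n%:R by rewrite divr_ge0 // ln_ge0 // ler1n.
    have h := HN1 n n1.
    have h2 : (M * Num.sqrt (ln (n%:R : R) / n%:R)) ^+ 2 <= p n ^+ 2.
      apply: lerXn2r h; rewrite nnegrE.
        by rewrite mulr_ge0 ?sqrtr_ge0 // ltW.
      by case/andP: hq.
    rewrite exprMn sqr_sqrtr // in h2.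
    by rewrite mulrA ler_pdivrMr // in h2.
  have hB := @bad_total R alpha beta c M (p n) n a0 b0 (erefl _) c1 hML n0 hq hqn.
  set B := \sum_(E | _) _ in hb0 hB *.
  suff hBK : B <= K / n.+1%:R by apply/andP; split; [rewrite lerD2l lerN2; exact: hBK | clearbody B; lra].
  apply: (le_trans hB).
  rewrite /K.
  have key : ((n%:R : R) ^+ 2)^-1 <= 2 * (n.+1%:R)^-1.
    have hn1 : (0 : R) < n.+1%:R by rewrite ltr0n.
    have -> : 2 * (n.+1%:R : R)^-1 = ((n%:R : R) ^+ 2)^-1 + (2 * n%:R ^+ 2 - n.+1%:R) / (n%:R ^+ 2 * n.+1%:R).
      by field; rewrite ?gt_eqF ?exprn_gt0 // ?mulr_gt0 ?exprn_gt0.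
    rewrite lerDl; apply: divr_ge0; last by rewrite mulr_ge0 // exprn_ge0.
    rewrite subr_ge0 -natr1 expr2.
    have : (1 : R) <= n%:R by rewrite ler1n.
    nra.
  have hc' : 0 < c^-1 by rewrite invr_gt0.
  move: key hc'; set x := c^-1; set y := ((n%:R : R) ^+ 2)^-1; set z := (n.+1%:R : R)^-1.
  move=> key hc'.
  nra.
- have := cvgB (cvg_cst (1 : R)) (@cvgMl_tmp _ _ _ _ _ K _ (@cvg_harmonic R)).
  move=> /(_ _ _ _) h.
  by rewrite mulr0 subr0 in h.
- exact: cvg_cst.
Qed.
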